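(* Let $\mathbb{F}$ be a field of characteristic zero, $d\ge 2$, $n=2d-2$, $P_n=\mathbb{F}[x_1,\dots,x_n]$ and $I_n=\big(x_1^2,\dots,x_n^2,(x_1+\cdots+x_n)^2\big)$; let $\mathrm{in}(I_n)$ be its initial ideal with respect to the reverse lexicographic order. If $\mu\in P_n$ is a monomial with $\deg(\mu)\le d-2$ and $\mu\notin\mathrm{in}(I_n)$, then there exists a monomial $\widetilde{\mu}\in P_n$ which is a multiple of $\mu$, with $\deg(\widetilde\mu)=d-1$ and $\widetilde\mu\notin\mathrm{in}(I_n)$.
   Context: The reverse lexicographic order is taken with $x_1>x_2>\cdots>x_n$. *)

(* Defs.v *)
From HB Require Import structures.
From mathcomp Require Import all_boot all_order all_algebra.
From mathcomp Require Import mpoly.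
Set Implicit Arguments. Unset Strict Implicit. Unset Printing Implicit Defensive.
Import Order.TTheory GRing.Theory.
Local Open Scope ring_scope.

Section InitialIdeal.
Variables (F : fieldType) (n : nat).
Local Notation P := {mpoly F[n]}.

Definition revlex_lt (m1 m2 : 'X_{1..n}) : Prop :=
  (mdeg m1 < mdeg m2)%N \/
  (mdeg m1 = mdeg m2 /\
   exists i : 'I_n, (m2 i < m1 i)%N /\ forall j : 'I_n, (i < j)%N -> m1 j = m2 j).

Definition is_lead_mono (f : P) (m : 'X_{1..n}) : Prop :=
  m \in msupp f /\ forall m', m' \in msupp f -> m' = m \/ revlex_lt m' m.

Definition in_ideal_gen (S : P -> Prop) (p : P) : Prop :=
  exists (k : nat) (c g : 'I_k -> P), (forall i, S (g i)) /\ p = \sum_(i < k) c i * g i.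

Definition initial_ideal (I : P -> Prop) : P -> Prop :=
  in_ideal_gen (fun q => exists (f : P) (m : 'X_{1..n}),
                  I f /\ f != 0 /\ is_lead_mono f m /\ q = 'X_[m]).

Definition ideal_In : P -> Prop := fun p =>
  exists (g : 'I_n -> P) (h : P),
    p = \sum_(i < n) g i * 'X_i ^+ 2 + h * (\sum_(i < n) 'X_i) ^+ 2.

End InitialIdeal.

(* Main.v *)
Require Import Defs.
From HB Require Import structures.
From mathcomp Require Import all_boot all_order all_algebra.
From mathcomp Require Import mpoly.
From mathcomp Require Import ring zify.
Import Order.TTheory GRing.Theory.
Local Open Scope ring_scope.

Section Gen.
Variables (F : fieldType) (n : nat).
Local Notation P := {mpoly F[n]}.
Local Notation J := (@ideal_In F n).
Definition ell : P := \sum_(i < n) 'X_i.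

Lemma J_add p q : J p -> J q -> J (p + q).
Proof.
move=> [g1 [h1 ->]] [g2 [h2 ->]].
exists (fun i => g1 i + g2 i), (h1 + h2).
under [in RHS]eq_bigr => i _ do rewrite mulrDl.
rewrite big_split /= mulrDl; ring.
Qed.

Lemma J_mul q p : J p -> J (q * p).
Proof.
move=> [g [h ->]]; exists (fun i => q * g i), (q * h).
by rewrite mulrDr mulr_sumr mulrA; congr (_ + _); apply: eq_bigr => i _; rewrite mulrA.
Qed.

Lemma J0 : J 0.
Proof. by exists (fun _ => 0), 0; rewrite big1 ?mul0r ?addr0 // => i _; rewrite mul0r. Qed.

Lemma J_opp p : J p -> J (- p).
Proof. by move=> Hp; rewrite -mulN1r; apply: J_mul. Qed.

Lemma J_sub p q : J p -> J q -> J (p - q).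
Proof. by move=> Hp Hq; apply: J_add => //; apply: J_opp. Qed.

Lemma J_scale c p : J p -> J (c *: p).
Proof. by move=> Hp; rewrite -mul_mpolyC; apply: J_mul. Qed.

Lemma J_sum (I : Type) (r : seq I) (Pr : pred I) (G : I -> P) :
  (forall i, Pr i -> J (G i)) -> J (\sum_(i <- r | Pr i) G i).
Proof.
move=> H; elim: r => [|x r IH]; first by rewrite big_nil; apply: J0.
rewrite big_cons; case: ifP => // Px; exact: J_add (H _ Px) IH.
Qed.

Lemma J_X2 (i : 'I_n) : J ('X_i ^+ 2).
Proof.
exists (fun j => if j == i then 1 else 0), 0.
rewrite mul0r addr0 (bigD1 i) //= eqxx mul1r big1 ?addr0 // => j /negbTE ->.
by rewrite mul0r.
Qed.

Lemma J_ell2 : J (ell ^+ 2).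
Proof.
exists (fun _ => 0), 1.
by rewrite mul1r [X in _ = X + _]big1 ?add0r // => j _; rewrite mul0r.
Qed.

Lemma J_mono (m : 'X_{1..n}) (i : 'I_n) : (2 <= m i)%N -> J 'X_[m].
Proof.
move=> H.
have le : (U_(i) *+ 2 <= m)%MM.
  by apply/mnm_lepP => j; rewrite mulmnE mnm1E; case: eqP => [<-|] //; rewrite muln2.
rewrite -(submK le) mpolyXD; apply: J_mul.
by rewrite -mpolyXn; apply: J_X2.
Qed.


Lemma mcoeffMXe (p : P) (e m : 'X_{1..n}) :
  (p * 'X_[e])@_m = if (e <= m)%MM then p@_(m - e) else 0.
Proof.
case: ifP => le.
  by rewrite -{1}(submK le) addmC mcoeffMX.
apply/memN_msupp_eq0; rewrite (perm_mem (msuppMX p e)).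
apply/negP => /mapP [m' _ Hm]; move/negP: le; apply; rewrite Hm; exact: lem_addr.
Qed.

Lemma mcoeffXiM (p : P) (i : 'I_n) m :
  ('X_i * p)@_m = if (U_(i) <= m)%MM then p@_(m - U_(i)) else 0.
Proof. by rewrite mulrC mcoeffMXe. Qed.

Lemma sum_neq0 (I : finType) (Q : pred I) (G : I -> F) :
  \sum_(i | Q i) G i != 0 -> exists i, Q i /\ G i != 0.
Proof.
move=> H; case: (boolP [exists i, Q i && (G i != 0)]).
  by move/existsP => [i /andP [Qi Gi]]; exists i.
move/existsPn => Hn; move/negP: H; case; apply/eqP.
by rewrite big1 // => i Qi; move: (Hn i); rewrite Qi /= negbK => /eqP.
Qed.


Definition lV (V : pred 'I_n) : P := \sum_(i | V i) 'X_i.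

Lemma lV_coefM (V : pred 'I_n) (q : P) m :
  (lV V * q)@_m = \sum_(i | V i) (if (U_(i) <= m)%MM then q@_(m - U_(i)) else 0).
Proof.
rewrite /lV mulr_suml raddf_sum /=; apply: eq_bigr => i _; exact: mcoeffXiM.
Qed.

Lemma supp_pow (V : pred 'I_n) k m : m \in msupp (lV V ^+ k) ->
  mdeg m = k /\ forall i, m i != 0%N -> V i.
Proof.
elim: k m => [|k IH] m.
  rewrite expr0 -mpolyC1 msupp1 mem_seq1 => /eqP ->.
  by split; [exact: mdeg0 | move=> i; rewrite mnm0E].
rewrite exprS mcoeff_msupp lV_coefM => /sum_neq0 [i [Vi]].
case: ifP => [le|]; last by rewrite eqxx.
rewrite -mcoeff_msupp => /IH [Hd Hs]; split.
  by rewrite -(submK le) mdegD Hd mdeg1 addn1.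
move=> j; rewrite -(submK le) mnmDE mnm1E.
case: (eqVneq i j) => [<- //|_]; rewrite addn0; exact: Hs.
Qed.

Lemma coef_pow (V : pred 'I_n) k (T : 'X_{1..n}) : (forall i, T i <= 1)%N -> mdeg T = k ->
  (forall i, T i != 0%N -> V i) -> (lV V ^+ k)@_T = (k`!)%:R.
Proof.
elim: k T => [|k IH] T sq dT sV.
  move/eqP: dT; rewrite mdeg_eq0 => /eqP ->.
  by rewrite expr0 mcoeff1 eqxx.
rewrite exprS lV_coefM.
rewrite (eq_bigr (fun i => ((T i * k`!)%N)%:R)); last first.
  move=> i Vi; rewrite lep1mP; case: (eqVneq (T i) 0%N) => [->|Ti0] //=.
  have Ti1 : T i = 1%N by move: (sq i) Ti0; case: (T i) => [|[|]].
  rewrite Ti1 mul1n IH //.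
  - by move=> j; rewrite mnmBE; apply: leq_trans (leq_subr _ _) (sq j).
  - have le : (U_(i) <= T)%MM by rewrite lep1mP.
    by move: dT; rewrite -{1}(submK le) mdegD mdeg1 addn1 => /succn_inj.
  - by move=> j; rewrite mnmBE => H; apply: sV; move: H; apply: contra => /eqP ->.
rewrite -natr_sum -big_distrl /= factS; congr (_ * _)%N%:R.
rewrite -dT mdegE [in RHS](bigID V) /= [X in _ = (_ + X)%N]big1 ?addn0 //.
by move=> i nVi; apply/eqP; apply: contraNT nVi; apply: sV.
Qed.

Lemma J_sumX_pow (s : seq 'I_n) N : (size s < N)%N ->
  J ((\sum_(i <- s) ('X_i : P)) ^+ N).
Proof.
elim: s N => [|a s IH] N H.
  by rewrite big_nil expr0n; case: N H => // N _; apply: J0.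
rewrite big_cons exprDn; apply: J_sum => t _.
rewrite -mulr_natl; apply: J_mul.
case: (leqP 2 (N - t)) => H2.
  rewrite -(subnK H2) exprD mulrC; apply: J_mul; apply: J_mul; apply: J_X2.
apply: J_mul; apply: IH.
move: H => /= H; have : (N - t <= 1)%N by rewrite -ltnS.
move: (ltn_ord t) => Ht; lia.
Qed.

Lemma J_lV (V : pred 'I_n) k : (#|predC V| + 2 <= k)%N -> J (lV V ^+ k).
Proof.
move=> Hk.
have E1 : \sum_(i <- enum (predC V)) ('X_i : P) = \sum_(i | ~~ V i) 'X_i.
  by rewrite big_enum; apply: eq_bigl => i; rewrite !inE.
have E : lV V = ell + - \sum_(i <- enum (predC V)) 'X_i.
  by rewrite E1 /ell (bigID V) /= addrK.
rewrite E exprDn; apply: J_sum => t _.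
rewrite -mulr_natl; apply: J_mul.
case: (leqP 2 (k - t)) => H2.
  rewrite -(subnK H2) exprD mulrC; apply: J_mul; apply: J_mul; apply: J_ell2.
rewrite exprNn mulrA; apply: J_mul; apply: J_sumX_pow.
have -> : size (enum (predC V)) = #|predC V| by rewrite cardE.
move: (ltn_ord t) => Ht; lia.
Qed.


Definition am (m : 'X_{1..n}) (l : nat) : nat :=
  odflt 0%N (omap m (insub l : option 'I_n)).
Definition cnt (m : 'X_{1..n}) (t : nat) : nat := (\sum_(l < t) am m l)%N.

Lemma am_ord m (i : 'I_n) : am m i = m i.
Proof. by rewrite /am valK. Qed.

Lemma am_ge m l : (n <= l)%N -> am m l = 0%N.
Proof. by move=> H; rewrite /am insubN // -leqNgt. Qed.

Lemma cntS m t : cnt m t.+1 = (cnt m t + am m t)%N.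
Proof. by rewrite /cnt big_ord_recr. Qed.

Lemma cnt_ord m t : cnt m t = (\sum_(i < n | (i < t)%N) m i)%N.
Proof.
elim: t => [|t IH].
  by rewrite /cnt big_ord0 big_pred0.
rewrite cntS IH [in RHS](bigID (fun i : 'I_n => (i < t)%N)) /=.
congr (_ + _)%N.
  by apply: eq_bigl => i; case: (ltnP i t) => H; rewrite ?andbT ?andbF // ltnS ltnW.
case: (ltnP t n) => Htn.
  have -> : am m t = m (Ordinal Htn) by rewrite -(am_ord m (Ordinal Htn)).
  rewrite (big_pred1 (Ordinal Htn)) // => i /=.
  by rewrite ltnS -leqNgt -eqn_leq eq_sym; apply/idP/idP => /eqP H; apply/eqP;
    [apply: val_inj|rewrite H].
rewrite am_ge // big_pred0 // => i; rewrite ltnS -leqNgt -eqn_leq.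
by apply/negP => /eqP H; move: (ltn_ord i); rewrite H ltnNge Htn.
Qed.

Lemma card_lt t : (\sum_(i < n | (i < t)%N) 1 <= t)%N.
Proof.
pose one : 'X_{1..n} := [multinom 1%N | i < n].
have -> : (\sum_(i < n | (i < t)%N) 1 = cnt one t)%N.
  by rewrite cnt_ord; apply: eq_bigr => i _; rewrite mnmE.
rewrite /cnt; apply: (@leq_trans (\sum_(l < t) 1)%N).
  by apply: leq_sum => l _; rewrite /am; case: insub => //= i; rewrite mnmE.
by rewrite sum_nat_const card_ord muln1.
Qed.

Lemma lt_sum (a b : 'X_{1..n}) i :
  (forall l, a l <= b l)%N -> (a i < b i)%N -> (mdeg a < mdeg b)%N.
Proof.
move=> H Hi; rewrite !mdegE (bigD1 i) //= [X in (_ < X)%N](bigD1 i) //=.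
have Hs : (\sum_(l < n | l != i) a l <= \sum_(l < n | l != i) b l)%N.
  by apply: leq_sum => l _; exact: H l.
by rewrite -addSn; apply: leq_add Hi Hs.
Qed.

Lemma lm_comb (mu m T : 'X_{1..n}) t :
  (forall i, T i = if (i < t)%N then mu i else 0%N) ->
  (forall i, m i <= 1)%N -> mdeg m = mdeg T ->
  (forall i, m i != 0%N -> (t <= i)%N || (mu i != 0%N)) ->
  m = T \/ revlex_lt m T.
Proof.
move=> HT sq dm sV.
case: (eqVneq m T) => [->|ne]; first by left.
have [i0 Hi0] : exists i, m i != T i.
  apply/existsP; apply: contraR ne => /existsPn H; apply/eqP/mnmP => i.
  by move: (H i); rewrite negbK => /eqP.
case: (@arg_maxnP _ i0 (fun i : 'I_n => m i != T i) (fun i : 'I_n => (i : nat)) Hi0) => i Pi Hmax.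
have above : forall l : 'I_n, (i < l)%N -> m l = T l.
  move=> l Hl; apply/eqP; apply: contraTT Hl => Hne; rewrite -leqNgt; exact: Hmax.
case: (ltngtP (m i) (T i)) => Hc; last by rewrite Hc eqxx in Pi.
- exfalso.
  have Hit : (i < t)%N by move: Hc; rewrite HT; case: ifP.
  have : (mdeg m < mdeg T)%N; last by rewrite dm ltnn.
  apply: (@lt_sum _ _ i) => // l.
  case: (ltnP i l) => Hl; first by rewrite above.
  have Hlt : (l < t)%N by apply: leq_ltn_trans Hl Hit.
  rewrite HT Hlt; case: (eqVneq (m l) 0%N) => [-> //|Hml].
  move: (sV l Hml); rewrite leqNgt Hlt /= => Hmu.
  by move: (sq l) Hmu; case: (m l) => [|[|]] //; case: (mu l).
- right; right; split => //; exists i; split => //.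
Qed.


Lemma lead_in_init (I : P -> Prop) f m mu : I f -> f != 0 -> is_lead_mono f m ->
  (m <= mu)%MM -> initial_ideal I 'X_[mu].
Proof.
move=> If nz lm le; exists 1%N, (fun _ => 'X_[mu - m]), (fun _ => 'X_[m]); split.
  by move=> _; exists f, m.
by rewrite big_ord1 -mpolyXD submK.
Qed.

Lemma nonballot_in (charF0 : [pchar F] =i pred0) (mu : 'X_{1..n}) t :
  (forall i, mu i <= 1)%N -> (t.+1 < 2 * cnt mu t)%N -> initial_ideal J 'X_[mu].
Proof.
move=> sq Hviol.
have [j Ej] : {j | cnt mu t = j} by exists (cnt mu t).
rewrite Ej in Hviol.
pose V : pred 'I_n := fun i => (t <= i)%N || (mu i != 0%N).
pose T : 'X_{1..n} := [multinom (if (i < t)%N then mu i else 0%N) | i < n].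
have HT : forall i, T i = if (i < t)%N then mu i else 0%N by move=> i; rewrite mnmE.
have Tle : (T <= mu)%MM by apply/mnm_lepP => i; rewrite HT; case: ifP.
have Tsq : forall i, (T i <= 1)%N by move=> i; rewrite HT; case: ifP.
have Tdeg : mdeg T = j.
  by rewrite -Ej cnt_ord mdegE [RHS]big_mkcond /=; apply: eq_bigr => i _; rewrite HT.
have TV : forall i, T i != 0%N -> V i.
  by move=> i; rewrite HT /V; case: ifP => // _ ->; rewrite orbT.
have Wcard : (#|predC V| + 2 <= j)%N.
  have E1 : #|predC V| = (\sum_(i < n | (i < t)%N) (mu i == 0%N))%N.
    rewrite -sum1_card big_mkcond [RHS]big_mkcond /=; apply: eq_bigr => i _.
    rewrite !inE /V negb_or -ltnNge negbK; by case: (i < t)%N; case: (mu i == 0%N).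
  have E2 : (\sum_(i < n | (i < t)%N) 1 = #|predC V| + j)%N.
    rewrite E1 -Ej cnt_ord -big_split /=; apply: eq_bigr => i _.
    by move: (sq i); case: (mu i) => [|[|]].
  have := card_lt t; rewrite E2; move: Hviol; lia.
have [pw Epw] : {pw | lV V ^+ j = pw} by exists (lV V ^+ j).
pose sqb (m : 'X_{1..n}) := [forall i, (m i <= 1)%N].
have [f Ef] : {f | \sum_(m <- msupp pw | sqb m) pw@_m *: 'X_[m] = f} by eexists.
have Jf : J f.
  have E : f = pw - \sum_(m <- msupp pw | ~~ sqb m) pw@_m *: 'X_[m].
    have E0 := mpolyE pw; rewrite (bigID sqb) /= Ef in E0.
    by rewrite {1}E0 addrK.
  rewrite E; apply: J_sub; first by rewrite -Epw; exact: J_lV.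
  apply: J_sum => m /forallPn [i Hi]; apply: J_scale; apply: (@J_mono _ i).
  by rewrite ltnNge.
have suppf : forall m, (m \in msupp f) = (m \in msupp pw) && sqb m.
  have Hu : uniq [seq m <- msupp pw | sqb m] by rewrite filter_uniq // msupp_uniq.
  have Hnz : {in [seq m <- msupp pw | sqb m], forall m, pw@_m != 0}.
    by move=> m'; rewrite mem_filter -mcoeff_msupp => /andP [].
  have Hp := msupp_sumX Hu Hnz.
  move=> m; rewrite -Ef -big_filter (perm_mem Hp) mem_filter andbC //.
have Tin : T \in msupp f.
  rewrite suppf; apply/andP; split; last by apply/forallP.
  rewrite mcoeff_msupp -Epw (coef_pow V j T Tsq Tdeg TV).
  by move/pcharf0P: charF0 => ->; rewrite -lt0n fact_gt0.
apply: (@lead_in_init J f T mu Jf _ _ Tle).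
  by apply/eqP => f0; move: Tin; rewrite f0 msupp0.
split => // m; rewrite suppf -Epw => /andP [/supp_pow [dm sV] /forallP sqm].
by apply: (@lm_comb mu m T t HT) => //; rewrite dm Tdeg.
Qed.


Definition ballot (m : 'X_{1..n}) := forall t, (2 * cnt m t <= t.+1)%N.

Lemma mdeg_ones (m : 'X_{1..n}) : (forall i, m i = 1%N) -> mdeg m = n.
Proof.
move=> H; rewrite mdegE (eq_bigr (fun _ => 1%N)) ?sum_nat_const ?card_ord ?muln1 //.
Qed.

Lemma extend_step (m : 'X_{1..n}) K : (forall i, m i <= 1)%N -> ballot m ->
  (mdeg m < K)%N -> (2 * K <= n.+1)%N ->
  exists m' : 'X_{1..n}, [/\ (m <= m')%MM, (forall i, m' i <= 1)%N, ballot m' &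
    mdeg m' = (mdeg m).+1].
Proof.
move=> sq bal dK Kn.
have [i0 Hi0] : exists i, m i == 0%N.
  apply/existsP; apply: contraT => /existsPn H.
  have : mdeg m = n.
    by apply: mdeg_ones => i; move: (H i) (sq i); case: (m i) => [|[|]].
  lia.
case: (@arg_maxnP _ i0 (fun i : 'I_n => m i == 0%N) (fun i : 'I_n => (i : nat)) Hi0)
  => i /eqP Pi Hmax.
exists (m + U_(i))%MM; split.
- exact: lem_addr.
- move=> l; rewrite mnmDE mnm1E; case: (eqVneq i l) => [<-|]; first by rewrite Pi.
  by rewrite addn0.
- have cntE : forall t, cnt (m + U_(i))%MM t = (cnt m t + (i < t))%N.
    move=> t; rewrite !cnt_ord.
    rewrite (eq_bigr (fun l => m l + (i == l))%N); last by move=> l _; rewrite mnmDE mnm1E.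
    rewrite big_split /=; congr (_ + _)%N.
    case: (ltnP i t) => Hit.
      rewrite (bigD1 i) //= eqxx big1 // => l /andP [_ /negbTE].
      by rewrite eq_sym => ->.
    rewrite big1 // => l Hl; case: eqP => // E.
    by move: Hl; rewrite -E ltnNge Hit.
  move=> t; rewrite cntE; case: (ltnP i t) => Hit /=; last by rewrite addn0; exact: bal.
  set m' := (m + U_(i))%MM.
  have H1 : (cnt m' t + \sum_(l < n | ~~ (l < t)%N) m' l = mdeg m')%N.
    by rewrite cnt_ord mdegE [in RHS](bigID (fun l : 'I_n => (l < t)%N)).
  have H2 : (\sum_(l < n | ~~ (l < t)%N) m' l = \sum_(l < n | ~~ (l < t)%N) 1)%N.
    apply: eq_bigr => l; rewrite -leqNgt => Hl.
    have Hil : (i < l)%N by apply: leq_trans Hit Hl.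
    rewrite /m' mnmDE mnm1E.
    have -> : (i == l) = false by apply/eqP => E; move: Hil; rewrite E ltnn.
    rewrite addn0.
    have : m l != 0%N by apply: contraTN Hil => Hl0; rewrite -leqNgt; exact: Hmax.
    by move: (sq l); case: (m l) => [|[|]].
  have H3 : (\sum_(l < n | (l < t)%N) 1 + \sum_(l < n | ~~ (l < t)%N) 1 = n)%N.
    rewrite [X in _ = X](_ : n = \sum_(l < n) 1)%N; last by rewrite sum_nat_const card_ord muln1.
    by rewrite [in RHS](bigID (fun l : 'I_n => (l < t)%N)) /=.
  have H4 := card_lt t.
  have H5 : mdeg m' = (mdeg m).+1 by rewrite /m' mdegD mdeg1 addn1.
  rewrite cntE Hit in H1.
  move: H1 H2 H3 H4 H5 dK Kn; lia.
- by rewrite mdegD mdeg1 addn1.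
Qed.

Lemma extend (m : 'X_{1..n}) K : (forall i, m i <= 1)%N -> ballot m ->
  (mdeg m <= K)%N -> (2 * K <= n.+1)%N ->
  exists m' : 'X_{1..n}, [/\ (m <= m')%MM, (forall i, m' i <= 1)%N, ballot m' &
    mdeg m' = K].
Proof.
move=> sq bal dK Kn.
have [e He] : exists e, (K - mdeg m)%N = e by eexists.
elim: e m sq bal dK He => [|e IH] m sq bal dK He.
  by exists m; split => //; [exact: lepm_refl | lia].
have [|m1 [le1 sq1 bal1 d1]] := @extend_step m K sq bal _ Kn; first lia.
have [||m2 [le2 sq2 bal2 d2]] := IH m1 sq1 bal1; try lia.
by exists m2; split => //; apply: lepm_trans le2.
Qed.


Lemma am_le1 (m : 'X_{1..n}) : (forall i, m i <= 1)%N -> forall l, (am m l <= 1)%N.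
Proof. by move=> sq l; rewrite /am; case: insub => //= i. Qed.

Lemma cnt_mono (m : 'X_{1..n}) t1 t2 : (t1 <= t2)%N -> (cnt m t1 <= cnt m t2)%N.
Proof.
elim: t2 => [|t2 IH]; first by rewrite leqn0 => /eqP ->.
rewrite leq_eqVlt => /orP [/eqP -> //|]; rewrite ltnS => /IH H.
by rewrite cntS; apply: leq_trans H (leq_addr _ _).
Qed.

Lemma cnt_le_add (m : 'X_{1..n}) t1 t2 : (forall i, m i <= 1)%N -> (t1 <= t2)%N ->
  (cnt m t2 <= cnt m t1 + (t2 - t1))%N.
Proof.
move=> sq; elim: t2 => [|t2 IH]; first by rewrite leqn0 => /eqP ->; rewrite addn0.
rewrite leq_eqVlt => /orP [/eqP -> |]; first by rewrite subnn addn0.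
rewrite ltnS => /[dup] H /IH H'; rewrite cntS; have := am_le1 m sq t2; lia.
Qed.

Lemma cnt0 (m : 'X_{1..n}) : cnt m 0 = 0%N.
Proof. by rewrite /cnt big_ord0. Qed.

Lemma cnt_le (m : 'X_{1..n}) t : (forall i, m i <= 1)%N -> (cnt m t <= t)%N.
Proof. by move=> sq; have := cnt_le_add m 0 t sq (leq0n t); rewrite cnt0 subn0. Qed.

Lemma cnt_n (m : 'X_{1..n}) : cnt m n = mdeg m.
Proof. by rewrite cnt_ord mdegE; apply: eq_bigl => i; rewrite ltn_ord. Qed.

Lemma ivt (a : nat -> nat) t v : (forall l, a l <= 1)%N -> (v < \sum_(l < t) a l)%N ->
  exists l, [/\ (l < t)%N, a l = 1%N & (\sum_(l' < l) a l')%N = v].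
Proof.
move=> a1; elim: t => [|t IH]; first by rewrite big_ord0.
have E : (\sum_(l < t.+1) a l = \sum_(l < t) a l + a t)%N by rewrite big_ord_recr.
rewrite E; case: (ltnP v (\sum_(l < t) a l)) => H1 H2.
  by have [l [Hl Hal Hs]] := IH H1; exists l; split => //; apply: ltnW.
exists t; split => //.
  by move: (a1 t) H1 H2; lia.
by move: (a1 t) H1 H2; lia.
Qed.

Section Cert.
Variable S : 'X_{1..n}.
Hypothesis sqS : forall i, (S i <= 1)%N.
Hypothesis balS : ballot S.
Hypothesis kpos : (0 < mdeg S)%N.
Hypothesis khalf : (2 * mdeg S <= n)%N.

Lemma S01 i : S i = 0%N \/ S i = 1%N.
Proof. by move: (sqS i); case: (S i) => [|[|]]; auto. Qed.

Lemma K2 (r1 r2 : 'I_n) : S r1 = 1%N -> S r2 = 1%N -> cnt S r1 = cnt S r2 -> r1 = r2.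
Proof.
have key : forall (a b : 'I_n), S a = 1%N -> (a < b)%N -> (cnt S a < cnt S b)%N.
  move=> a b Sa ab; apply: leq_trans (cnt_mono S a.+1 b ab).
  by rewrite cntS am_ord Sa addn1.
move=> H1 H2 E; case: (ltngtP r1 r2) => H.
- by move: (key _ _ H1 H); rewrite E ltnn.
- by move: (key _ _ H2 H); rewrite E ltnn.
- exact: val_inj.
Qed.

Lemma K3 (b1 b2 : 'I_n) : S b1 = 0%N -> S b2 = 0%N ->
  (b1 - cnt S b1 = b2 - cnt S b2)%N -> b1 = b2.
Proof.
have key : forall (a b : 'I_n), S a = 0%N -> (a < b)%N ->
    (a - cnt S a < b - cnt S b)%N.
  move=> a b Sa ab.
  have H1 := cnt_le_add S a.+1 b sqS ab; rewrite cntS am_ord Sa addn0 in H1.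
  have H3 := cnt_le S a sqS.
  lia.
move=> H1 H2 E; case: (ltngtP b1 b2) => H.
- by move: (key _ _ H1 H); rewrite E ltnn.
- by move: (key _ _ H2 H); rewrite E ltnn.
- exact: val_inj.
Qed.


Lemma cnt_strict (a b : 'I_n) : S a = 1%N -> (a < b)%N -> (cnt S a < cnt S b)%N.
Proof.
move=> Sa ab; apply: leq_trans (cnt_mono S a.+1 b ab).
by rewrite cntS am_ord Sa addn1.
Qed.
Arguments cnt_strict {a b}.


Lemma K4 v : (v < mdeg S)%N -> exists r : 'I_n, S r = 1%N /\ cnt S r = v.
Proof.
rewrite -cnt_n => H; have [l [Hl Hal Hs]] := ivt (am S) n v (am_le1 S sqS) H.
exists (Ordinal Hl); split; first by rewrite -am_ord.
exact: Hs.
Qed.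

Lemma cc t : (t <= n)%N -> (\sum_(l < t) ((l < n) - am S l) = t - cnt S t)%N.
Proof.
elim: t => [|t IH] H; first by rewrite big_ord0 cnt0.
have E : (\sum_(l < t.+1) ((l < n) - am S l) = \sum_(l < t) ((l < n) - am S l) + ((t < n) - am S t))%N
  by rewrite big_ord_recr.
rewrite E IH ?(ltnW H) // H cntS.
have := cnt_le S t sqS; have := am_le1 S sqS t; lia.
Qed.

Lemma K5 v : (v < n - mdeg S)%N -> exists b : 'I_n, S b = 0%N /\ (b - cnt S b = v)%N.
Proof.
rewrite -cnt_n -cc // => H.
have a1 : forall l, ((l < n) - am S l <= 1)%N by move=> l; case: (l < n)%N; lia.
have [l [Hl Hal Hs]] := ivt (fun l => ((l < n) - am S l)%N) n v a1 H.
exists (Ordinal Hl); split.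
  by rewrite -am_ord /=; move: Hal; rewrite Hl; lia.
by rewrite -Hs /= cc // ltnW.
Qed.

Definition partner (b : 'I_n) : option 'I_n :=
  if S b == 1%N then None
  else [pick r | (S r == 1%N) && (cnt S r == (b - cnt S b).+1)%N].
Definition sig (i : 'I_n) : 'I_n := if S i == 1%N then i else odflt i (partner i).
Definition cf (i : 'I_n) : F :=
  if S i == 1%N then 1 else if partner i is Some _ then -1 else 0.

Lemma partner_spec b r : partner b = Some r ->
  [/\ S b = 0%N, S r = 1%N, cnt S r = (b - cnt S b).+1 & (b < r)%N].
Proof.
rewrite /partner; case: ifP => // Sb.
case: pickP => // r' /andP [/eqP Sr /eqP Cr] [<-].
have Sb0 : S b = 0%N by case: (S01 b) => // E; rewrite E in Sb.
split => //.
case: (ltngtP b r') => // H.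
  have := cnt_strict Sr H; have := balS b; have := cnt_le S b sqS; lia.
have E : b = r' by apply: val_inj.
  by move: Sr; rewrite -E Sb0.
Qed.
Arguments partner_spec {b r}.


Lemma partner_exists b r : S b = 0%N -> S r = 1%N -> cnt S r = (b - cnt S b).+1 ->
  partner b = Some r.
Proof.
move=> Sb Sr Cr; rewrite /partner Sb /=.
case: pickP => [r' /andP [/eqP Sr' /eqP Cr']|H].
  by congr Some; apply: K2 => //; rewrite Cr Cr'.
by move: (H r); rewrite Sr Cr !eqxx.
Qed.
Arguments partner_exists {b r}.


Lemma sigS i : S i = 1%N -> sig i = i /\ cf i = 1.
Proof. by move=> Si; rewrite /sig /cf Si eqxx. Qed.
Arguments sigS {i}.


Lemma sigN i r : partner i = Some r -> sig i = r /\ cf i = -1.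
Proof.
move=> Hp; have [Si _ _ _] := partner_spec Hp.
by rewrite /sig /cf Si /= Hp.
Qed.
Arguments sigN {i r}.


Lemma sigNN i : S i = 0%N -> partner i = None -> cf i = 0.
Proof. by move=> Si Hp; rewrite /cf Si /= Hp. Qed.
Arguments sigNN {i}.


Lemma coef_r r : \sum_(i | sig i == r) cf i =
  if (S r == 1%N) && (cnt S r == 0%N) then 1 else 0.
Proof.
case: (S01 r) => Sr.
  rewrite Sr /= big1 // => i /eqP si.
  case: (S01 i) => Si; last by have [E _] := sigS Si; move: Sr; rewrite -si E Si.
  case Hp: (partner i) => [r'|]; last exact: sigNN.
  have [E _] := sigN Hp; have [_ Sr' _ _] := partner_spec Hp.
  by move: Sr; rewrite -si E Sr'.
have [sr cr] := sigS Sr.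
rewrite Sr eqxx /= (bigD1 r) /=; last by rewrite sr.
rewrite cr; case: (eqVneq (cnt S r) 0%N) => C0.
  rewrite big1 ?addr0 // => i /andP [/eqP si ne].
  case: (S01 i) => Si; last by have [E _] := sigS Si; move: ne; rewrite -si E eqxx.
  case Hp: (partner i) => [r'|]; last exact: sigNN.
  have [E _] := sigN Hp; have [_ _ C _] := partner_spec Hp.
  by move: C0; rewrite -si E C.
have [|b [Sb Cb]] := K5 (cnt S r).-1.
  have := cnt_mono S r.+1 n (ltn_ord r); rewrite cntS am_ord Sr cnt_n.
  move: C0 khalf; lia.
have Pb : partner b = Some r by apply: partner_exists => //; rewrite Cb; move: C0; lia.
have [sb cb] := sigN Pb.
have nbr : b != r by apply/eqP => E; move: Sb; rewrite E Sr.
rewrite (bigD1 b) /=; last by rewrite sb eqxx nbr.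
rewrite cb big1 ?addr0 ?subrr // => i /andP [/andP [/eqP si ne] nb].
case: (S01 i) => Si; last by have [E _] := sigS Si; move: ne; rewrite -si E eqxx.
case Hp: (partner i) => [r'|]; last exact: sigNN.
have [E _] := sigN Hp; have [_ _ C _] := partner_spec Hp.
have rr : r' = r by rewrite -E si.
rewrite rr in C.
have ib : i = b by apply: K3 => //; move: C0 C Cb; lia.
by move: nb; rewrite ib eqxx.
Qed.


Definition vv (i : 'I_n) : P := cf i *: 'X_(sig i).

Lemma sum_vv : exists r0, S r0 = 1%N /\ \sum_i vv i = 'X_r0.
Proof.
have [r0 [Sr0 Cr0]] := K4 0 kpos; exists r0; split => //.
rewrite /vv (partition_big sig (fun _ => true)) //=.
rewrite (eq_bigr (fun r => (if (S r == 1%N) && (cnt S r == 0%N) then 1 else 0) *: 'X_r)); last first.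
  move=> r _; rewrite -coef_r scaler_suml; apply: eq_bigr => i /eqP <- //.
rewrite (bigD1 r0) //= Sr0 Cr0 !eqxx scale1r big1 ?addr0 // => r ne.
case: ifP => [/andP [/eqP Sr /eqP Cr]|]; last by rewrite scale0r.
by move: ne; rewrite (K2 r r0 Sr Sr0) ?eqxx // Cr Cr0.
Qed.

Definition mm (p : P) : P := mmap (@mpolyC n F) vv p.
Definition phi (p : P) : F := (mm p)@_S.

Lemma mmM p q : mm (p * q) = mm p * mm q.
Proof. exact: rmorphM. Qed.
Lemma mmD p q : mm (p + q) = mm p + mm q.
Proof. exact: rmorphD. Qed.
Lemma mm0 : mm 0 = 0.
Proof. exact: rmorph0. Qed.
Lemma mmXn p k : mm (p ^+ k) = mm p ^+ k.
Proof. exact: rmorphXn. Qed.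
Lemma mm_sum (I : Type) (r : seq I) (Q : pred I) (G : I -> P) :
  mm (\sum_(i <- r | Q i) G i) = \sum_(i <- r | Q i) mm (G i).
Proof. exact: (big_morph _ mmD mm0). Qed.
Lemma mmZ c p : mm (c *: p) = c *: mm p.
Proof. by rewrite /mm mmapZ mul_mpolyC. Qed.
Lemma mmXm m : mm 'X_[m] = \prod_(i < n) vv i ^+ m i.
Proof. by rewrite /mm mmapX. Qed.
Lemma mmX i : mm 'X_i = vv i.
Proof. by rewrite /mm mmapX mmap1U. Qed.

Lemma coefS_sq (q : P) (r : 'I_n) : (q * 'X_[U_(r) *+ 2])@_S = 0.
Proof.
rewrite mcoeffMXe; case: ifP => // /mnm_lepP /(_ r).
by rewrite mulmnE mnm1E eqxx mul1n => H; move: (leq_trans H (sqS r)).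
Qed.

Lemma phi_kill p : J p -> phi p = 0.
Proof.
have [r0 [_ Hs]] := sum_vv.
move=> [g [h ->]]; rewrite /phi mmD mcoeffD mm_sum raddf_sum /=.
rewrite big1 ?add0r.
  rewrite mmM mmXn /ell mm_sum.
  rewrite (eq_bigr (fun i => vv i)); last by move=> i _; exact: mmX.
  by rewrite Hs mpolyXn coefS_sq.
move=> i _; rewrite mmM mmXn mmX /vv exprZn mpolyXn -scalerAr mcoeffZ.
by rewrite coefS_sq mulr0.
Qed.

Definition Em (m : 'X_{1..n}) : 'X_{1..n} := (\sum_(i < n) U_(sig i) *+ m i)%MM.

Lemma EmE (m : 'X_{1..n}) r : Em m r = (\sum_(i < n) ((sig i == r) * m i))%N.
Proof. by rewrite /Em mnm_sumE; apply: eq_bigr => i _; rewrite mulmnE mnm1E. Qed.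

Lemma phiX (m : 'X_{1..n}) : phi 'X_[m] = (\prod_(i < n) cf i ^+ m i) * (Em m == S)%:R.
Proof.
rewrite /phi mmXm (eq_bigr (fun i => cf i ^+ m i *: 'X_[U_(sig i) *+ m i])); last first.
  by move=> i _; rewrite /vv exprZn mpolyXn.
rewrite scaler_prod mcoeffZ; congr (_ * _).
by rewrite -(big_morph _ (@mpolyXD n F) (@mpolyX0 n F)) mcoeffX.
Qed.

Lemma phiS : phi 'X_[S] = 1.
Proof.
rewrite phiX big1 ?mul1r; last first.
  move=> i _; case: (S01 i) => Si; rewrite Si; first by rewrite expr0.
  by have [_ ->] := sigS Si; rewrite expr1.
have -> : Em S = S.
  apply/mnmP => r; rewrite EmE (bigD1 r) //= big1 ?addn0.
    by case: (S01 r) => Sr; rewrite Sr ?muln0 //; have [-> _] := sigS Sr; rewrite eqxx.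
  move=> i ne; case: (S01 i) => Si; rewrite Si ?muln0 //.
  by have [E _] := sigS Si; rewrite E (negbTE ne).
by rewrite eqxx.
Qed.

Lemma Em_ge2 (m : 'X_{1..n}) (l1 l2 : 'I_n) r : l1 != l2 -> sig l1 = r -> sig l2 = r ->
  (m l1 + m l2 <= Em m r)%N.
Proof.
move=> ne s1 s2; rewrite EmE (bigD1 l1) //= (bigD1 l2) /=; last by rewrite eq_sym ne.
by rewrite s1 s2 eqxx !mul1n addnA leq_addr.
Qed.

Lemma Em_ge1 (m : 'X_{1..n}) (l : 'I_n) : (m l <= Em m (sig l))%N.
Proof. by rewrite EmE (bigD1 l) //= eqxx mul1n leq_addr. Qed.

Lemma mdegEm (m : 'X_{1..n}) : mdeg (Em m) = mdeg m.
Proof.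
rewrite /Em (big_morph _ mdegD mdeg0) mdegE.
by apply: eq_bigr => i _; rewrite mdegMn mdeg1 mul1n.
Qed.

Lemma tri (m : 'X_{1..n}) : phi 'X_[m] != 0 -> revlex_lt m S -> False.
Proof.
rewrite phiX mulf_eq0 negb_or => /andP [Hprod HE].
have ES : Em m = S by apply/eqP; move: HE; case: (Em m == S) => //=; rewrite eqxx.
have cfnz : forall i, (0 < m i)%N -> cf i != 0.
  move=> i mi; apply: contra Hprod => /eqP ci.
  by rewrite (bigD1 i) //= ci expr0n (negbTE (lt0n_neq0 mi)) /= mulr0n mul0r.
case => [|[_ [i [Hi Habove]]]].
  by rewrite -ES mdegEm ltnn.
case: (S01 i) => Si.
  have cnz := cfnz i (leq_ltn_trans (leq0n _) Hi).
  case Hp: (partner i) => [r|]; last by move: cnz; rewrite sigNN ?eqxx.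
  have [sr _] := sigN Hp; have [_ Sr _ ir] := partner_spec Hp.
  have [rr _] := sigS Sr.
  have mr : m r = 1%N by rewrite Habove // Sr.
  have ne : i != r by apply/eqP => E; move: ir; rewrite E ltnn.
  have := Em_ge2 m i r r ne sr rr; rewrite ES mr Sr; lia.
have [E _] := sigS Si.
by have := Em_ge1 m i; rewrite E ES; move: Hi (sqS i); lia.
Qed.


Lemma revlex_shift (u a b : 'X_{1..n}) : revlex_lt a b -> revlex_lt (u + a)%MM (u + b)%MM.
Proof.
case => [H|[E [i [Hi Ha]]]].
  by left; rewrite !mdegD ltn_add2l.
right; split; first by rewrite !mdegD E.
exists i; split; first by rewrite !mnmDE ltn_add2l.
by move=> j Hj; rewrite !mnmDE Ha.
Qed.

Lemma key f m : J f -> f != 0 -> is_lead_mono f m -> (m <= S)%MM -> False.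
Proof.
move=> Jf nz [min Hlm] le.
set u := (S - m)%MM.
have Juf : J ('X_[u] * f) by apply: J_mul.
have := phi_kill _ Juf.
have E : 'X_[u] * f = \sum_(m' <- msupp f) f@_m' *: 'X_[(u + m')%MM].
  rewrite {1}[f]mpolyE mulr_sumr; apply: eq_bigr => m' _.
  by rewrite -scalerAr mpolyXD.
rewrite E /phi mm_sum raddf_sum /=.
rewrite (eq_bigr (fun m' => f@_m' * phi 'X_[(u + m')%MM])); last first.
  by move=> m' _; rewrite mmZ mcoeffZ.
rewrite (bigD1_seq m) //= ?msupp_uniq //.
have -> : (u + m)%MM = S by rewrite /u submK.
rewrite phiS mulr1 big1_seq ?addr0.
  by move=> H; move: min; rewrite mcoeff_msupp H eqxx.
move=> m' /andP [ne Hin]; case: (Hlm m' Hin) => [E'|lt]; first by rewrite E' eqxx in ne.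
case: (eqVneq (phi 'X_[(u + m')%MM]) 0) => [-> |nz']; first by rewrite mulr0.
exfalso; apply: (tri _ nz'); have := revlex_shift u m' m lt.
by rewrite /u submK.
Qed.

Lemma cert : ~ initial_ideal J 'X_[S].
Proof.
move=> [K [c [g [Hg E]]]].
have : ('X_[S] : P)@_S = 0.
  rewrite E raddf_sum big1 // => i _.
  case: (Hg i) => f [m [Jf [nz [lm ->]]]].
  transitivity (if (m <= S)%MM then (c i)@_(S - m) else 0); first exact: mcoeffMXe. case: ifP => // le; exfalso; exact: (key _ _ Jf nz lm le).
by rewrite mcoeffX eqxx => /eqP; rewrite oner_eq0.
Qed.

End Cert.

End Gen.

Theorem mainTheorem7 (F : fieldType) (charF0 : [pchar F] =i pred0)
  (d : nat) (hd : (2 <= d)%N) (mu : 'X_{1..(2 * d - 2)}) :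
  (mdeg mu <= d - 2)%N ->
  ~ initial_ideal (@ideal_In F (2 * d - 2)) 'X_[mu] ->
  exists mu' : 'X_{1..(2 * d - 2)},
    (mu <= mu')%MM /\ mdeg mu' = (d - 1)%N /\
    ~ initial_ideal (@ideal_In F (2 * d - 2)) 'X_[mu'].
Proof.
move=> dmu Hni.
have sq : forall i, (mu i <= 1)%N.
  move=> i; case: (leqP (mu i) 1) => // H; exfalso; apply: Hni.
  have le2 : (U_(i) *+ 2 <= mu)%MM.
    by apply/mnm_lepP => j; rewrite mulmnE mnm1E; case: eqP => [<-|] //; rewrite muln2.
  apply: (@lead_in_init F _ _ ('X_[U_(i) *+ 2]) (U_(i) *+ 2) mu _ _ _ le2).
  - by apply: (@J_mono F _ _ i); rewrite mulmnE mnm1E eqxx.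
  - by apply/eqP => E; move: (@mcoeffX _ F (U_(i) *+ 2) (U_(i) *+ 2)%MM);
      rewrite E mcoeff0 eqxx => /eqP; rewrite eq_sym oner_eq0.
  - split; first by rewrite msuppX mem_seq1.
    by move=> m'; rewrite msuppX mem_seq1 => /eqP ->; left.
have bal : @ballot _ mu.
  move=> t; case: (leqP (2 * @cnt _ mu t) t.+1) => // H; exfalso; apply: Hni.
  exact: (@nonballot_in F _ charF0 mu t sq H).
have H1 : (mdeg mu <= d - 1)%N by lia.
have H2 : (2 * (d - 1) <= (2 * d - 2).+1)%N by lia.
have [m' [le sq' bal' dm']] := @extend _ mu (d - 1) sq bal H1 H2.
exists m'; split => //; split => //.
apply: (@cert F _ m' sq' bal'); lia.
Qed.
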